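(* Let $S$ be a numerical semigroup with minimal generators $e<a_1<\dots<a_t$, and let $n\in S$ with $n\equiv i\pmod e$, $0\le i<e$. Then ${\rm adj}(n)\in{\rm adj}(S_i)$ and ${\rm d}_{\max}(n;S)\le|\mathcal R({\rm adj}(n))|$. In particular, $\mathcal R({\rm adj}(n))$ is nonempty.
   Context: A numerical semigroup is a submonoid of $(\mathbb N,+)$ with finite complement in $\mathbb N$. An $S$-factorization of $n\in S$ is a tuple $(c_0,\dots,c_t)\in\mathbb N^{t+1}$ with $c_0e+\sum c_ia_i=n$, of length $\sum c_i$. ${\rm ord}(n;S)$ is the maximal such length, and ${\rm d}_{\max}(n;S)$ is the number of $S$-factorizations of $n$ of length ${\rm ord}(n;S)$. Let $d_i=a_i-e$, $B=\langle e,d_1,\dots,d_t\rangle$ and $\mathcal D=(e,d_1,\dots,d_t)$. A $B^{\mathcal D}$-factorization of $b\in B$ is $(x_0,\dots,x_t)\in\mathbb N^{t+1}$ with $x_0e+\sum x_id_i=b$, of length $\sum x_i$. $\min{\rm ord}(b;B^{\mathcal D})$ is the minimal such length, and $\mathcal P(b)$ is the set of all of them. Put ${\rm adj}(s)=s-{\rm ord}(s;S)e$ for $s\in S$, and $S_i=\{s\in S:s\equiv i\pmod e\}$. Write ${\rm adj}(S_i)=\{{\rm adj}(s):s\in S_i\}=\{u_0<u_1<\cdots\}$. Define $\mathcal R(u_0)=\mathcal P(u_0)$ and, for $j>0$, $\mathcal R(u_j)=\{\mathbf x\in\mathcal P(u_j):|\mathbf x|<\min{\rm ord}(u_{j-1};B^{\mathcal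 D})-\frac{u_j-u_{j-1}}{e}\}$. *)

(* Defs.v *)
From mathcomp Require Import all_boot all_order all_algebra.
Set Implicit Arguments. Unset Strict Implicit. Unset Printing Implicit Defensive.
Import Order.TTheory GRing.Theory Num.Theory.

(* Generator vectors are indexed by 'I_k.  For the semigroup S we use
   g = (e, a_1, ..., a_t) and for B we use D = (e, d_1, ..., d_t). *)

Definition gens (e t : nat) (a : 'I_t -> nat) : 'I_t.+1 -> nat :=
  fun k => match unlift ord0 k with None => e | Some j => a j end.

Definition dgens (e t : nat) (a : 'I_t -> nat) : 'I_t.+1 -> nat :=
  fun k => match unlift ord0 k with None => e | Some j => a j - e end.

Definition inMon (k : nat) (g : 'I_k -> nat) (b : nat) : Prop :=
  exists c : 'I_k -> nat, \sum_(j < k) c j * g j = b.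

(* the set of all factorizations of b w.r.t. g; since all generators are
   positive, every entry of a factorization of b is <= b, so entries are
   taken in 'I_b.+1 without loss *)
Definition facts (k : nat) (g : 'I_k -> nat) (b : nat)
  : {set {ffun 'I_k -> 'I_b.+1}} :=
  [set c : {ffun 'I_k -> 'I_b.+1} | \sum_(j < k) (c j : nat) * g j == b].

Definition flen (k m : nat) (c : {ffun 'I_k -> 'I_m}) : nat :=
  \sum_(j < k) (c j : nat).

Definition ordS (k : nat) (g : 'I_k -> nat) (b : nat) : nat :=
  \max_(c in facts g b) flen c.

Definition dmax (k : nat) (g : 'I_k -> nat) (b : nat) : nat :=
  #|[set c in facts g b | flen c == ordS g b]|.

(* min ord(b) : minimal length of a factorization (lengths are <= b, so b is
   a neutral starting value) *)
Definition minord (k : nat) (g : 'I_k -> nat) (b : nat) : nat :=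
  \big[minn/b]_(c in facts g b) flen c.

Definition adj (e k : nat) (g : 'I_k -> nat) (s : nat) : nat :=
  s - ordS g s * e.

Definition inAdjS (e k : nat) (g : 'I_k -> nat) (i u : nat) : Prop :=
  exists s, [/\ inMon g s, s %% e = i & adj e g s = u].

(* pu is the predecessor of u in adj(S_i): None if u is the minimum u_0,
   Some u' if u' = u_{j-1} where u = u_j *)
Definition is_pred (e k : nat) (g : 'I_k -> nat) (i u : nat)
  (pu : option nat) : Prop :=
  match pu with
  | None => forall v, inAdjS e g i v -> u <= v
  | Some u' => [/\ inAdjS e g i u', u' < u &
                 forall v, inAdjS e g i v -> v < u -> v <= u']
  end.

Definition Rset (e k : nat) (D : 'I_k -> nat) (pu : option nat) (u : nat)
  : {set {ffun 'I_k -> 'I_u.+1}} :=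
  match pu with
  | None => facts D u
  | Some u' => [set x in facts D u |
       ((flen x)%:Q < (minord D u')%:Q - (u%:Q - u'%:Q) / e%:Q)%R]
  end.

Definition min_gens_numsg (e t : nat) (a : 'I_t -> nat) : Prop :=
  [/\ 0 < e,
      (forall j : 'I_t, e < a j),
      (forall j j' : 'I_t, j < j' -> a j < a j'),
      (forall k : 'I_t.+1, ~ exists c : 'I_t.+1 -> nat,
          c k = 0 /\ \sum_(j < t.+1) c j * gens e a j = gens e a k) &
      (exists N, forall m, N <= m -> inMon (gens e a) m)].

(* Main.v *)
Require Import Defs.
From mathcomp Require Import all_boot all_order all_algebra.
From mathcomp Require Import zify.
Import GRing.Theory Num.Theory.

Lemma gens0 e t (a : 'I_t -> nat) : gens e a ord0 = e.
Proof. by rewrite /gens unlift_none. Qed.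
Lemma gensl e t (a : 'I_t -> nat) k : gens e a (lift ord0 k) = a k.
Proof. by rewrite /gens liftK. Qed.
Lemma dgens0 e t (a : 'I_t -> nat) : dgens e a ord0 = e.
Proof. by rewrite /dgens unlift_none. Qed.
Lemma dgensl e t (a : 'I_t -> nat) k : dgens e a (lift ord0 k) = a k - e.
Proof. by rewrite /dgens liftK. Qed.

Lemma decomp e t (a : 'I_t -> nat) (c : 'I_t.+1 -> nat) :
  (forall k, e <= a k) ->
  \sum_(j < t.+1) c j * gens e a j =
  (\sum_(j < t.+1) c j) * e + \sum_(k < t) c (lift ord0 k) * (a k - e).
Proof.
move=> ha; rewrite !big_ord_recl gens0 mulnDl big_distrl /= -addnA; congr (_ + _).
rewrite -big_split /=; apply: eq_bigr => k _; rewrite gensl -mulnDr subnKC //.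
Qed.

Lemma dsum e t (a : 'I_t -> nat) (c : 'I_t.+1 -> nat) :
  \sum_(j < t.+1) c j * dgens e a j =
  c ord0 * e + \sum_(k < t) c (lift ord0 k) * (a k - e).
Proof. by rewrite big_ord_recl dgens0; congr (_ + _); apply: eq_bigr => k _; rewrite dgensl. Qed.

Lemma mkfact k (g : 'I_k -> nat) (f : 'I_k -> nat) b :
  (forall j, 0 < g j) -> \sum_(j < k) f j * g j = b ->
  exists y, y \in facts g b /\ forall j, (y j : nat) = f j.
Proof.
move=> hg hs.
have hb : forall j, f j < b.+1.
  move=> j; rewrite ltnS -hs (bigD1 j) //=.
  apply: leq_trans (leq_addr _ _); rewrite -{1}(muln1 (f j)) leq_mul2l hg orbT //.
exists [ffun j => Ordinal (hb j)]; split; last by move=> j; rewrite ffunE.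
rewrite inE; apply/eqP; apply: etrans hs; apply: eq_bigr => j _; rewrite ffunE //.
Qed.

Lemma flen_le k (g : 'I_k -> nat) b (y : {ffun 'I_k -> 'I_b.+1}) :
  (forall j, 0 < g j) -> y \in facts g b -> flen y <= b.
Proof.
move=> hg; rewrite inE => /eqP hs; rewrite /flen; apply: leq_trans (_ : _ <= \sum_(j < k) (y j : nat) * g j) _; last by rewrite hs.
apply: leq_sum => j _; by rewrite -{1}(muln1 (y j : nat)) leq_mul2l hg orbT.
Qed.

Lemma max_fact k (g : 'I_k -> nat) s :
  (forall j, 0 < g j) -> inMon g s ->
  exists c, c \in facts g s /\ flen c = Defs.ordS g s.
Proof.
move=> hg [f hf]; have [y [hy _]] := @mkfact _ g f s hg hf.
have hc : 0 < #|facts g s| by apply/card_gt0P; exists y.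
have [c hc1 hc2] := eq_bigmax_cond (fun c => flen c) hc.
by exists c; split => //; rewrite /Defs.ordS hc2.
Qed.

Lemma ord_ge k (g : 'I_k -> nat) s c : c \in facts g s -> flen c <= Defs.ordS g s.
Proof. by move=> h; rewrite /Defs.ordS (@leq_bigmax_cond _ (fun c => c \in facts g s) (fun c => flen c) c h). Qed.

Lemma minord_att k (g : 'I_k -> nat) b :
  (forall j, 0 < g j) -> facts g b != set0 ->
  exists y, y \in facts g b /\ flen y <= minord g b.
Proof.
move=> hg /set0Pn [y0 hy0]; rewrite /minord.
apply: (big_ind (fun v => exists y, y \in facts g b /\ flen y <= v)).
- by exists y0; split => //; apply: flen_le.
- move=> v w [y1 [h1 h1']] [y2 [h2 h2']]; case: (leqP v w) => hvw.
  + by exists y1; split => //; rewrite (minn_idPl hvw).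
  + by exists y2; split => //; rewrite (minn_idPr (ltnW hvw)).
- by move=> y hy; exists y.
Qed.

Lemma adj_eq e t (a : 'I_t -> nat) s (c : {ffun 'I_t.+1 -> 'I_s.+1}) :
  (forall k, e <= a k) -> c \in facts (gens e a) s -> flen c = Defs.ordS (gens e a) s ->
  Defs.ordS (gens e a) s * e <= s /\
  adj e (gens e a) s = \sum_(k < t) (c (lift ord0 k) : nat) * (a k - e).
Proof.
move=> ha; rewrite inE => /eqP hs ho.
have hd := @decomp e t a (fun j => (c j : nat)) ha; rewrite hs -/(flen c) ho in hd.
rewrite /adj; split; lia.
Qed.

Lemma Qineq (X M u u' e : nat) : 0 < e -> u' <= u -> X * e + (u - u') < M * e ->
  (X%:Q < M%:Q - (u%:Q - u'%:Q) / e%:Q)%R.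
Proof.
move=> he hu h; rewrite -!pmulrn.
have hE : (e%:Q != 0)%R by rewrite pnatr_eq0 -lt0n.
rewrite -natrB // ltrBrDr.
have -> : (X%:R + (u - u')%N%:R / e%:R = (X * e + (u - u'))%N%:R / e%:R :> rat)%R.
  by rewrite natrD natrM mulrDl mulfK.
by rewrite ltr_pdivrMr ?ltr0n // -natrM ltr_nat.
Qed.

Lemma ar1 (x y S O : nat) : x + S = O -> y + S = O -> x = y.
Proof. lia. Qed.
Lemma ar_sub (n p : nat) : p <= n -> n = p + (n - p).
Proof. lia. Qed.
Lemma ar87 (u u' X X' i : nat) : u' = X' + i -> u = X + i -> u - u' = X - X'.
Proof. lia. Qed.
Lemma ar95 (c0 L o y0 Y m q : nat) : c0 + L = o -> y0 + Y <= m -> m <= L + q -> Y <= o + y0 + q.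
Proof. lia. Qed.
Lemma ar98 (A B C W u u' n : nat) : B + W = u' -> u - u' = C -> n = A + u -> u' < u -> A + B + C + W = n.
Proof. lia. Qed.
Lemma ar102 (o y q : nat) : o + y + q <= o -> 0 < q -> False.
Proof. lia. Qed.

Theorem theorem3p7 (e t : nat) (a : 'I_t -> nat) (n i : nat) :
  min_gens_numsg e a ->
  inMon (gens e a) n -> i < e -> n %% e = i ->
  inAdjS e (gens e a) i (adj e (gens e a) n) /\
  (forall pu : option nat, is_pred e (gens e a) i (adj e (gens e a) n) pu ->
     dmax (gens e a) n <= #|Rset e (dgens e a) pu (adj e (gens e a) n)| /\
     Rset e (dgens e a) pu (adj e (gens e a) n) != set0).
Proof.
move=> [he hea _ _ _] hn hie hni.
have ha : forall k, e <= a k by move=> k; apply: ltnW.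
have hG : forall j, 0 < gens e a j.
  by move=> j; rewrite /gens; case: (unlift ord0 j) => [k|] //; apply: leq_trans (hea k).
have hD : forall j, 0 < dgens e a j.
  by move=> j; rewrite /dgens; case: (unlift ord0 j) => [k|] //; rewrite subn_gt0.
split; first by exists n.
move=> pu hpu.
set u := adj e (gens e a) n.
set A := [set c in facts (gens e a) n | flen c == Defs.ordS (gens e a) n].
pose phi (c : {ffun 'I_t.+1 -> 'I_n.+1}) : {ffun 'I_t.+1 -> 'I_u.+1} :=
  [ffun j => if j == ord0 then ord0 else inord (c j)].
have Aprop : forall c, c \in A ->
   [/\ c \in facts (gens e a) n, flen c = Defs.ordS (gens e a) n,
       Defs.ordS (gens e a) n * e <= n,
       u = \sum_(k < t) (c (lift ord0 k) : nat) * (a k - e) &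
       forall k, (c (lift ord0 k) : nat) <= u].
  move=> c; rewrite inE => /andP [hc /eqP ho].
  have [h1 h2] := @adj_eq e t a n c ha hc ho.
  split => //; move=> k; rewrite /u h2 (bigD1 k) //=.
  apply: leq_trans (leq_addr _ _); rewrite -{1}(muln1 (c _ : nat)) leq_mul2l.
  by rewrite subn_gt0 hea orbT.
have phi0 : forall c, (phi c ord0 : nat) = 0 by move=> c; rewrite ffunE eqxx.
have phil : forall c k, c \in A -> (phi c (lift ord0 k) : nat) = c (lift ord0 k).
  move=> c k hc; have [_ _ _ _ hk] := Aprop c hc.
  by rewrite ffunE eq_sym (negbTE (neq_lift _ _)) inordK // ltnS.
have phiF : forall c, c \in A -> phi c \in facts (dgens e a) u.
  move=> c hc; have [_ _ _ hu _] := Aprop c hc.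
  rewrite inE; apply/eqP; rewrite (@dsum e t a (fun j => (phi c j : nat))) phi0 mul0n add0n.
  apply: etrans (esym hu); apply: eq_bigr => k _; rewrite phil //.
have phiL : forall c, c \in A -> flen (phi c) = \sum_(k < t) (c (lift ord0 k) : nat).
  move=> c hc; rewrite /flen big_ord_recl phi0 add0n.
  by apply: eq_bigr => k _; rewrite phil.
have phiI : {in A &, injective phi}.
  move=> c1 c2 h1 h2 heq; apply/ffunP => j; apply: val_inj.
  have hk : forall k, (c1 (lift ord0 k) : nat) = c2 (lift ord0 k).
    by move=> k; rewrite -(phil _ _ h1) -(phil _ _ h2) heq.
  case: (unliftP ord0 j) => [k ->|->]; first exact: hk.
  have [_ o1 _ _ _] := Aprop c1 h1; have [_ o2 _ _ _] := Aprop c2 h2.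
  move: o1 o2; rewrite /flen !big_ord_recl (eq_bigr _ (fun k _ => hk k)) /=; exact: ar1.
have phiR : forall c, c \in A -> phi c \in Rset e (dgens e a) pu u.
  move=> c hc; case: pu hpu => [u'|] /=; last by move=> _; apply: phiF.
  move=> [[s' [hs' hs'm hadj]] hlt _].
  rewrite inE phiF //=.
  have [c' [hc' ho']] := @max_fact _ (gens e a) s' hG hs'.
  have [ho'e hu'] := @adj_eq e t a s' c' ha hc' ho'; rewrite hadj in hu'.
  pose f := fun j : 'I_t.+1 => if j == ord0 then 0 else (c' j : nat).
  have hfs : \sum_(j < t.+1) f j * dgens e a j = u'.
    rewrite dsum /f eqxx mul0n add0n hu'; apply: eq_bigr => k _.
    by rewrite eq_sym (negbTE (neq_lift _ _)).
  have [y0 [hy0 _]] := @mkfact _ (dgens e a) f u' hD hfs.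
  have hne : facts (dgens e a) u' != set0 by apply/set0Pn; exists y0.
  have [y [hy hym]] := @minord_att _ (dgens e a) u' hD hne.

  have [_ hoc hoe hu _] := Aprop c hc.
  move: hy; rewrite inE => /eqP; rewrite (@dsum e t a (fun j => (y j : nat))) => hyu.
  move: hoc hym; rewrite /flen !big_ord_recl => hoc hym.
  set o := Defs.ordS (gens e a) n in hoc hoe hu *.
  set L := \sum_(k < t) (c (lift ord0 k) : nat) in hoc.
  set Y := \sum_(k < t) (y (lift ord0 k) : nat) in hym.
  set W := \sum_(k < t) (y (lift ord0 k) : nat) * (a k - e) in hyu.
  set m' := minord (dgens e a) u' in hym *.
  have hun : u = n - o * e by [].
  have hnu : n = o * e + u by rewrite hun; apply: ar_sub.
  have hum : u %% e = i.
    by rewrite -hni [in RHS]hnu modnMDl.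
  have hu'm : u' %% e = i.
    have hns : s' = Defs.ordS (gens e a) s' * e + u' by rewrite -hadj /adj; apply: ar_sub.
    by rewrite -hs'm [in RHS]hns modnMDl.
  apply: Qineq => //; first exact: ltnW.
  rewrite phi0 add0n (eq_bigr _ (fun k _ => phil c k hc)) -/L.
  rewrite ltnNge; apply/negP => hcon.
  set q := u %/ e - u' %/ e.
  have huq : u - u' = q * e.
    have := divn_eq u e; have := divn_eq u' e; rewrite hum hu'm /q mulnBl.
    exact: ar87.
  have hq : 0 < q.
    rewrite lt0n; apply/negP => /eqP hq0; by move: hlt; rewrite -/u -subn_gt0 huq hq0 mul0n.
  rewrite huq -mulnDl leq_pmul2r // in hcon.
  have hYle : Y <= o + (y ord0 : nat) + q by apply: ar95 hoc hym hcon.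
  pose f2 := fun j : 'I_t.+1 => if j == ord0 then o + (y ord0 : nat) + q - Y else (y j : nat).
  have f2l : forall k, f2 (lift ord0 k) = y (lift ord0 k).
    by move=> k; rewrite /f2 eq_sym (negbTE (neq_lift _ _)).
  have hsum : \sum_(j < t.+1) f2 j = o + (y ord0 : nat) + q.
    by rewrite big_ord_recl (eq_bigr _ (fun k _ => f2l k)) -/Y /f2 eqxx subnK.
  have hf2 : \sum_(j < t.+1) f2 j * gens e a j = n.
    rewrite (@decomp e t a f2 ha) hsum (eq_bigr _ (fun k _ => congr1 (fun v => v * (a k - e)) (f2l k))) -/W.
    rewrite !mulnDl; apply: ar98 hyu huq hnu hlt.
  have [z [hz hzv]] := @mkfact _ (gens e a) f2 n hG hf2.
  have := @ord_ge _ (gens e a) n z hz; rewrite -/o.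
  have -> : flen z = o + (y ord0 : nat) + q by rewrite /flen -hsum; apply: eq_bigr.
  by move=> h; apply: ar102 h hq.
split.
- rewrite /dmax -/A -(card_in_imset phiI); apply: subset_leq_card.
  by apply/subsetP => x /imsetP [c hc ->]; apply: phiR.
- have [c [hc hco]] := @max_fact _ (gens e a) n hG hn.
  apply/set0Pn; exists (phi c); apply: phiR; rewrite inE hc hco eqxx //.
Qed.
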